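(* Let $R$ and $Q$ be finite sequences of formulas and $I,J$ models. If $I\le_{\emptyset R\cdot Q}J$, then $I\le_{\emptyset Q}J$.
   Context: Propositional models are truth assignments over a finite set of variables; a formula used where a set of models is expected stands for its set of models. A doxastic state is a sequence $C=[C(0),\ldots,C(k)]$ of nonempty, pairwise disjoint sets of models covering all models; $I\le_C J$ iff $I\in C(i)$, $J\in C(j)$ with $i\le j$. The flat doxastic state $\emptyset$ is $[\text{all models}]$. Lexicographic revision: $C\,\mathrm{lex}(A)=[C(0)\cap A,\ldots,C(k)\cap A,C(0)\setminus A,\ldots,C(k)\setminus A]$, empty sets discarded. For a sequence of formulas $T=[T_1,\ldots,T_n]$, $\emptyset T$ denotes $\emptyset$ revised lexicographically by $T_1$, then $T_2$, ..., then $T_n$. $R\cdot Q$ is concatenation. *)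

(* Defs.v *)
From mathcomp Require Import all_boot.
Set Implicit Arguments. Unset Strict Implicit. Unset Printing Implicit Defensive.

Definition model (n : nat) := {ffun 'I_n -> bool}.

Inductive formula (n : nat) : Type :=
| FVar : 'I_n -> formula n
| FTop : formula n
| FBot : formula n
| FNot : formula n -> formula n
| FAnd : formula n -> formula n -> formula n
| FOr  : formula n -> formula n -> formula n
| FImp : formula n -> formula n -> formula n.

Fixpoint holds n (I : model n) (F : formula n) : bool :=
  match F with
  | FVar x => I x
  | FTop => true
  | FBot => false
  | FNot A => ~~ holds I A
  | FAnd A B => holds I A && holds I B
  | FOr A B => holds I A || holds I B
  | FImp A B => holds I A ==> holds I B
  end.

Definition mods n (F : formula n) : {set model n} := [set I | holds I F].

Definition doxstate n := seq {set model n}.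

Definition is_doxstate n (C : doxstate n) : Prop :=
  [/\ forall i, i < size C -> nth set0 C i != set0,
      forall i j, i < size C -> j < size C -> i != j ->
        [disjoint nth set0 C i & nth set0 C j]
    & forall I : model n, exists2 i, i < size C & I \in nth set0 C i].

Definition dle n (C : doxstate n) (I J : model n) : Prop :=
  exists i j, [/\ i < size C, j < size C, i <= j,
                  I \in nth set0 C i & J \in nth set0 C j].

Definition flat n : doxstate n := [:: [set: model n]].

Definition lex n (C : doxstate n) (A : {set model n}) : doxstate n :=
  [seq X <- [seq X :&: A | X <- C] ++ [seq X :\: A | X <- C] | X != set0].

(* emptyset T : flat state revised by T_1, then T_2, ..., then T_n *)
Definition revise n (T : seq (formula n)) : doxstate n :=
  foldl (fun C F => lex C (mods F)) (flat n) T.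

(* Main.v *)
Require Import Defs.
From mathcomp Require Import all_boot.
Set Implicit Arguments. Unset Strict Implicit.

Fixpoint dleb n (C : doxstate n) (I J : model n) : bool :=
  if C is X :: C' then ((I \in X) && has (fun Y : {set model n} => J \in Y) (X :: C')) || dleb C' I J
  else false.

Lemma dleP n (C : doxstate n) I J : dle C I J <-> dleb C I J.
Proof.
elim: C => [|X C IH] /=.
  by split=> // -[i [j [/=]]].
split.
  move=> [[|i] [[|j] [/= Hi Hj Hij HI HJ]]].
  - by rewrite HI /= HJ.
  - apply/orP; left; rewrite HI /=; apply/orP; right; apply/hasP.
    by exists (nth set0 C j) => //; apply: mem_nth.
  - by [].
  - apply/orP; right; apply/IH; by exists i, j; split.
move=> /orP [/andP [HI HJ']|].
  have /hasP [Y HY HJ] : has (fun Y : {set model n} => J \in Y) (X :: C) by [].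
  exists 0, (index Y (X :: C)); split => //.
  by rewrite index_mem.
  by rewrite nth_index.
move=> /IH [i [j [Hi Hj Hij HI HJ]]].
by exists i.+1, j.+1; split.
Qed.

Definition inb n (I : model n) (C : doxstate n) := has (fun Y : {set model n} => I \in Y) C.

Lemma has_filt n (C : doxstate n) I :
  inb I [seq X <- C | X != set0] = inb I C.
Proof.
elim: C => //= X C IH; case: ifP => /= [_|/negbFE/eqP ->]; rewrite ?IH //.
by rewrite in_set0.
Qed.

Lemma dleb_filt n (C : doxstate n) I J :
  dleb [seq X <- C | X != set0] I J = dleb C I J.
Proof.
elim: C => //= X C IH; have := has_filt (X :: C) J; rewrite /inb /=.
case: eqP => [->|nz] /=; rewrite IH ?in_set0 //.
by move=> ->.
Qed.

Lemma dleb_cat n (s1 s2 : doxstate n) I J :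
  dleb (s1 ++ s2) I J = [|| dleb s1 I J, inb I s1 && inb J s2 | dleb s2 I J].
Proof.
elim: s1 => //= X s1 IH; rewrite IH /inb has_cat /=.
by case: (I \in X); case: (J \in X); case: (has _ s1); case: (has _ s2);
   case: (dleb s1 I J); case: (has _ s1); case: (dleb s2 I J).
Qed.

Lemma inb_mapI n (C : doxstate n) A I : inb I [seq X :&: A | X <- C] = (I \in A) && inb I C.
Proof.
elim: C => /= [|X C IH]; first by rewrite andbF.
by rewrite IH inE; case: (I \in X); case: (I \in A).
Qed.

Lemma inb_mapD n (C : doxstate n) A I : inb I [seq X :\: A | X <- C] = (I \notin A) && inb I C.
Proof.
elim: C => /= [|X C IH]; first by rewrite andbF.
by rewrite IH inE; case: (I \in X); case: (I \in A).
Qed.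

Lemma dleb_mapI n (C : doxstate n) A I J :
  dleb [seq X :&: A | X <- C] I J = [&& I \in A, J \in A & dleb C I J].
Proof.
elim: C => //= [|X C IH]; first by rewrite !andbF.
move: (inb_mapI (X :: C) A J); rewrite /inb /= => ->.
rewrite IH inE; case: (I \in X); case: (I \in A); case: (J \in A) => //=.
Qed.

Lemma dleb_mapD n (C : doxstate n) A I J :
  dleb [seq X :\: A | X <- C] I J = [&& I \notin A, J \notin A & dleb C I J].
Proof.
elim: C => //= [|X C IH]; first by rewrite !andbF.
move: (inb_mapD (X :: C) A J); rewrite /inb /= => ->.
rewrite IH inE; case: (I \in X); case: (I \in A); case: (J \in A) => //=.
Qed.

Lemma inb_lex n (C : doxstate n) A I : inb I (lex C A) = inb I C.
Proof.
rewrite /lex has_filt /inb has_cat -!/(inb _ _) inb_mapI inb_mapD.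
by case: (I \in A); case: (inb I C).
Qed.

Lemma dleb_lex n (C : doxstate n) A I J :
  dleb (lex C A) I J =
  [|| [&& I \in A, J \in A & dleb C I J],
      [&& I \in A, inb I C, J \notin A & inb J C] |
      [&& I \notin A, J \notin A & dleb C I J]].
Proof.
rewrite /lex dleb_filt dleb_cat dleb_mapI dleb_mapD inb_mapI inb_mapD.
by case: (I \in A); case: (J \in A); case: (inb I C); case: (inb J C).
Qed.

Lemma mono_fold n (Q : seq (formula n)) (C D : doxstate n) :
  (forall I, inb I C) -> (forall I, inb I D) ->
  (forall I J, dleb C I J -> dleb D I J) ->
  forall I J, dleb (foldl (fun C F => lex C (mods F)) C Q) I J ->
              dleb (foldl (fun C F => lex C (mods F)) D Q) I J.
Proof.
elim: Q C D => //= F Q IH C D HC HD HCD; apply: IH.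
- by move=> I; rewrite inb_lex.
- by move=> I; rewrite inb_lex.
move=> I J; rewrite !dleb_lex HC HD.
case: (I \in mods F); case: (J \in mods F) => //=; rewrite ?orbF.
all: try (exact: HCD). all: by rewrite HD.
Qed.

Lemma inb_rev n (R : seq (formula n)) (C : doxstate n) :
  (forall I, inb I C) -> forall I, inb I (foldl (fun C F => lex C (mods F)) C R).
Proof.
elim: R C => //= F R IH C HC; apply: IH => I; by rewrite inb_lex.
Qed.

Theorem mainTheorem19 (n : nat) (R Q : seq (formula n)) (I J : model n) :
  dle (revise (R ++ Q)) I J -> dle (revise Q) I J.
Proof.
have Hf : forall I : model n, inb I (flat n) by move=> K; rewrite /inb /= inE.
rewrite /revise foldl_cat => /dleP H; apply/dleP; move: H; apply: mono_fold.
- exact: inb_rev.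
- exact: Hf.
by move=> K L _; rewrite /flat /= !inE.
Qed.
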